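(* Let $a,b$ be nonzero complex numbers with $a\ne b$ and $a+b\neq0$, and let $n$ be a positive integer. Define $$f(a,b)=\lim_{x\to \frac{2ab}{a+b}}\frac{d^n}{dx^n}\,\frac{(x-a)^n(x-b)^n}{x^{n+1}}.$$ Then $f(a,b)=0$ if $n$ is odd, and if $n$ is even $$f(a,b)=(-1)^{n/2}(a-b)^n\left(\frac{a+b}{2ab}\right)^{n+1}\prod_{i=1}^{n/2}(2i-1)^2.$$ *)

(* Defs.v *)
From mathcomp Require Import all_boot all_algebra.
From mathcomp Require Import all_classical all_reals all_analysis.
From mathcomp Require Import complex.
Import GRing.Theory Num.Theory numFieldNormedType.Exports.
Local Open Scope ring_scope.

(* The complex numbers: R[i] for a real type R (complete archimedean
   ordered field), viewed as a numFieldType so that MathComp-Analysis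
   equips it with its modulus-norm topology; derivatives of functions
   CC R -> CC R are then complex derivatives. *)
Definition CC (R : realType) : numFieldType := R[i].

(* Main.v *)
Require Import Defs.
From mathcomp Require Import all_boot all_algebra.
From mathcomp Require Import all_classical all_reals all_analysis.
From mathcomp Require Import complex.
From mathcomp Require Import ring lra zify.
Import GRing.Theory Num.Theory numFieldNormedType.Exports.
Local Open Scope ring_scope.
Local Open Scope classical_set_scope.

Section Lemma9Aux.
Import mathcomp.order.order.Order.TTheory.
Variable R : realType.
Local Notation C := (CC R).

Lemma is_derive_hornerC (p : {poly C}) (x : C) : is_derive x 1 (horner p) p^`().[x].
Proof.
elim/poly_ind: p => [|p r ih].
  have -> : horner (0 : {poly C}) = cst 0 by apply/funext => y; rewrite horner0.
  rewrite deriv0 horner0; exact: is_derive_cst.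
have -> : horner (p * 'X + r%:P) = (horner p * id) + cst r.
  by apply/funext => y; rewrite hornerMXaddC.
have H := is_deriveD (is_deriveM ih (is_derive_id x 1)) (is_derive_cst r x 1).
apply: is_derive_eq H _.
rewrite derivMXaddC !hornerE /=.
change (p.[x] * 1 + x * p^`().[x] = p.[x] + p^`().[x] * x). ring.
Qed.

Lemma is_derive_invX (m : nat) (x : C) : x != 0 ->
  is_derive x 1 (fun y : C => (y ^+ m)^-1) (- (x^+m)^-2 * (m%:R * x^+m.-1)).
Proof.
move=> x0.
have H := is_deriveX m (is_derive_id x (1 : C)).
have hx : (@id C ^+ m) x != 0 by rewrite exprfctE expf_neq0.
have -> : (fun y : C => (y ^+ m)^-1) = (fun y => ((@id C ^+ m) y)^-1).
  by apply/funext => y; rewrite exprfctE.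
have D := derivableV hx (@ex_derive _ _ _ _ _ _ _ H). apply: DeriveDef. exact: D.
rewrite (deriveV hx (@ex_derive _ _ _ _ _ _ _ H)) (@derive_val _ _ _ _ _ _ _ H) exprfctE.
by change (- (x ^+ m)^-2 * ((m%:R * x ^+ m.-1) * 1) = - (x ^+ m)^-2 * (m%:R * x ^+ m.-1)); rewrite mulr1.
Qed.

Lemma is_derive_rat (P : {poly C}) (m : nat) (x : C) : x != 0 ->
  is_derive x 1 (fun y => P.[y] / y ^+ m) ((P^`().[x] * x - m%:R * P.[x]) / x ^+ m.+1).
Proof.
move=> x0.
have H := is_deriveM (is_derive_hornerC P x) (is_derive_invX m x x0).
have -> : (fun y => P.[y] / y ^+ m) = (horner P * (fun y : C => (y ^+ m)^-1)) by [].
apply: is_derive_eq H _.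
change (P.[x] * (- (x^+m)^-2 * (m%:R * x^+m.-1)) + (x ^+ m)^-1 * P^`().[x] =
  (P^`().[x] * x - m%:R * P.[x]) / x ^+ m.+1).
case: m => [|m]; first by rewrite !expr0 expr1; field.
rewrite /=.
have xm : x ^+ m != 0 by rewrite expf_neq0.
have e2 : x ^+ m.+2 = x^+m * x * x by rewrite !exprSr.
have e1 : x ^+ m.+1 = x ^+ m * x by rewrite exprSr.
rewrite e2 e1.
field.
by rewrite xm x0.
Qed.

Lemma near_neq0 (x : C) : x != 0 -> \forall y \near x, y != 0.
Proof.
move=> x0; apply/nbhs_ballP; exists `|x|; first by rewrite /= normr_gt0.
move=> y; rewrite -ball_normE /ball_ /= => h; apply/eqP => y0; move: h.
by rewrite y0 subr0 ltxx.
Qed.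

Lemma derive1nS (f : C -> C) k : derive1n k.+1 f = derive1 (derive1n k f).
Proof. by []. Qed.

Fixpoint Tk (m k : nat) (P : {poly C}) : {poly C} :=
  if k is k'.+1 then 'X * (Tk m k' P)^`() - (m + k')%:R *: Tk m k' P else P.

Lemma derivn_rat (P : {poly C}) m k x : x != 0 ->
  (fun y => P.[y] / y ^+ m)^`(k) x = (Tk m k P).[x] / x ^+ (m + k).
Proof.
elim: k x => [|k IH] x x0; first by rewrite addn0.
rewrite derive1nS.
rewrite derive1E.
rewrite (near_eq_derive (g := fun y => (Tk m k P).[y] / y ^+ (m + k))); last first.
  by near=> y; apply: IH; near: y; exact: near_neq0.
rewrite (@derive_val _ _ _ _ _ _ _ (is_derive_rat (Tk m k P) (m + k) x x0)).
rewrite /= addnS !hornerE.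
by rewrite [_ * x]mulrC.
Unshelve. all: by end_near. Qed.

Lemma lim_derivn_rat (P : {poly C}) m k (x0 : C) : x0 != 0 ->
  (fun y => P.[y] / y ^+ m)^`(k) x @[x --> x0^'] --> (Tk m k P).[x0] / x0 ^+ (m + k).
Proof.
move=> x0n.
set h := fun y : C => (Tk m k P).[y] / y ^+ (m + k).
have hc : h x @[x --> x0^'] --> h x0.
  apply/continuous_withinNx; apply: differentiable_continuous.
  apply/derivable1_diffP.
  exact: (@ex_derive _ _ _ _ _ _ _ (is_derive_rat (Tk m k P) (m + k) x0 x0n)).
have E : \forall y \near x0^', h y = (fun y => P.[y] / y ^+ m)^`(k) y.
  apply: cvg_within; near=> y; rewrite /h derivn_rat //.
  near: y; exact: near_neq0.
exact: cvg_trans (near_eq_cvg E) hc.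
Unshelve. all: by end_near. Qed.


Lemma poly_ext_nat (p q : {poly C}) : (forall i : nat, p.[i%:R] = q.[i%:R]) -> p = q.
Proof.
move=> h; apply/eqP; rewrite -subr_eq0; apply/eqP.
apply: (@roots_geq_poly_eq0 _ _ [seq i%:R | i <- iota 0 (size (p - q))]).
- by apply/allP => x /mapP [i _ ->]; rewrite /root hornerD hornerN h subrr.
- rewrite map_inj_uniq ?iota_uniq // => i j /eqP; rewrite eqr_nat => /eqP.
  done.
- by rewrite size_map size_iota.
Qed.

Lemma coef_Tk m k (P : {poly C}) j :
  (Tk m k P)`_j = P`_j * \prod_(i < k) (j%:R - (m + i)%:R).
Proof.
elim: k => [|k IH]; first by rewrite big_ord0 mulr1.
rewrite /= coefB coefZ coefXM coef_deriv big_ord_recr /=.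
case: j IH => [|j] IH /=; rewrite IH; first by ring.
rewrite -mulr_natr; ring.
Qed.


Lemma size_Tk m k P : (size (Tk m k P) <= size P)%N.
Proof. by apply/leq_sizeP => j hj; rewrite coef_Tk nth_default // mul0r. Qed.

Lemma ffact_prodR (i n : nat) : \prod_(l < n) (i%:R - l%:R : C) = (i ^_ n)%:R.
Proof.
elim: n => [|n IH]; first by rewrite big_ord0 ffactn0.
rewrite big_ord_recr /= IH ffactnSr natrM.
case: (leqP n i) => h; first by rewrite natrB.
by rewrite ffact_small // !mul0r.
Qed.

Lemma prodN_ord n (F : nat -> C) :
  \prod_(l < n) (- F l) = (-1)^+n * \prod_(l < n) F l.
Proof.
elim: n => [|n IH]; first by rewrite !big_ord0 mulr1.
by rewrite !big_ord_recr /= IH exprS; ring.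
Qed.

Lemma XaddC_exp (e : C) n : ('X + e%:P)^+n = \poly_(i < n.+1) (e^+(n-i) *+ 'C(n,i)).
Proof.
rewrite addrC exprDn poly_def; apply: eq_bigr => i _.
by rewrite -rmorphXn /= mul_polyC scalerMnl.
Qed.

Lemma coef_XaddC_exp (e : C) n k : (('X + e%:P)^+n)`_k = e^+(n-k) *+ 'C(n,k).
Proof.
rewrite XaddC_exp coef_poly; case: ltnP => // h.
by rewrite bin_small.
Qed.

Lemma sum_widen (p : {poly C}) (G : nat -> C) N : (size p <= N)%N ->
  \sum_(i < size p) p`_i * G i = \sum_(i < N) p`_i * G i.
Proof.
move=> h; rewrite (big_ord_widen N (fun i => p`_i * G i)) // big_mkcond.
apply: eq_bigr => i _; case: ltnP => // hi; by rewrite nth_default // mul0r.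
Qed.

Lemma coef_comp_X1 (p : {poly C}) k N : (size p <= N)%N ->
  (p \Po ('X + 1%:P))`_k = \sum_(i < N) p`_i * ('C(i,k))%:R.
Proof.
move=> h; rewrite coef_comp_poly -(@sum_widen p (fun i => ('C(i,k))%:R) N h).
by apply: eq_bigr => i _; rewrite coef_XaddC_exp expr1n.
Qed.

Lemma horner_Tk m k (P : {poly C}) (x : C) (N : nat) : (size P <= N)%N ->
  (Tk m k P).[x] = \sum_(j < N) P`_j * \prod_(i < k) (j%:R - (m + i)%:R) * x ^+ j.
Proof.
move=> h; rewrite (@horner_coef_wide _ N); last exact: leq_trans (size_Tk _ _ _) h.
by apply: eq_bigr => j _; rewrite coef_Tk.
Qed.


Lemma S1 (P : {poly C}) n (x : C) : (size P <= (n + n).+1)%N ->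
  (Tk n.+1 n P).[x] = (-1)^+n * (n`!)%:R *
    ((\poly_(i < (n + n).+1) (P`_(n + n - i) * x ^+ (n + n - i))) \Po ('X + 1%:P))`_n.
Proof.
move=> hP.
rewrite (horner_Tk _ _ _ _ _ hP) (coef_comp_X1 _ _ _ (size_poly _ _)).
rewrite (reindex_inj rev_ord_inj) /= mulr_sumr; apply: eq_bigr => i _.
rewrite coef_poly ltn_ord subSS.
have hi : (i <= n + n)%N by rewrite -ltnS.
set j := (n + n - i)%N.
rewrite (reindex_inj rev_ord_inj) /=.

have E : forall l : 'I_n, (j%:R - (n.+1 + (n - l.+1))%:R : C) = - (i%:R - l%:R).
  move=> l; rewrite /j natrB // !natrD natrB ?ltn_ord //; ring.
under eq_bigr => l _ do rewrite E.
rewrite (prodN_ord n (fun l => i%:R - l%:R)) ffact_prodR -bin_ffact natrM.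
ring.
Qed.

Lemma S2 (P : {poly C}) N (x s : C) : (size P <= N.+1)%N -> s != 0 ->
  (\poly_(i < N.+1) (P`_(N - i) * x ^+ (N - i))).[s] = s ^+ N * P.[x / s].
Proof.
move=> hP s0.
rewrite horner_poly (@horner_coef_wide _ N.+1) // mulr_sumr.
rewrite (reindex_inj rev_ord_inj) /=; apply: eq_bigr => i _.
have hi : (i <= N)%N by rewrite -ltnS.
rewrite subSS subKn // exprB ?unitfE // exprMn exprVn.
have si : s ^+ i != 0 by rewrite expf_neq0.
by field.
Qed.

Lemma comp_exp (p q : {poly C}) n : (p ^+ n) \Po q = (p \Po q) ^+ n.
Proof.
elim: n => [|n IH]; first by rewrite !expr0 -polyC1 comp_polyC.
by rewrite !exprS comp_polyM IH.
Qed.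

Lemma coef_sq (e : C) n :
  (('X^2 + e%:P)^+n)`_n = if odd n then 0 else e ^+ (n - n./2) *+ 'C(n, n./2).
Proof.
have -> : ('X^2 + e%:P)^+n = (('X + e%:P)^+n) \Po 'X^2.
  by rewrite comp_exp comp_polyD comp_polyX comp_polyC.
rewrite coef_comp_poly_Xn // dvdn2 divn2; case: (odd n) => //=.
by rewrite coef_XaddC_exp.
Qed.

Lemma dfact k : (k.*2)`! = (2 ^ k * k`! * \prod_(1 <= i < k.+1) (2 * i - 1))%N.
Proof.
elim: k => [|k IH]; first by rewrite big_geq.
rewrite doubleS !factS IH [in RHS]big_nat_recr //= expnS.
have -> : (2 * k.+1 - 1 = k.*2.+1)%N by rewrite -muln2 mulnC; lia.
rewrite -!muln2; ring.
Qed.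

Lemma nat_id k : ((k.*2)`! * 'C(k.*2, k) = 4 ^ k * (\prod_(1 <= i < k.+1) (2 * i - 1)) ^ 2)%N.
Proof.
have h := bin_fact (leq_addl k k).
rewrite addnK addnn in h.
apply/eqP; rewrite -(@eqn_pmul2r (k`! * k`!)%N); last by rewrite muln_gt0 fact_gt0.
rewrite -mulnA h dfact.
rewrite (_ : 4 ^ k = 2 ^ k * 2 ^ k)%N; last by rewrite -expnD addnn -mul2n expnM.
apply/eqP; ring.
Qed.

Lemma expMn' (x y : C) k : x ^+ k * y ^+ k = (x * y) ^+ k.
Proof. by rewrite exprMn. Qed.

Lemma powk (u v w z : C) k : w != 0 -> z != 0 ->
  ((-1) * (u^+2 * v^+2 / (w^+2 * z)))^+k
  = (-1)^+k * (u^+k)^+2 * (v^+k)^+2 / ((w^+k)^+2 * z^+k).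
Proof.
move=> w0 z0; elim: k => [|k IH]; first by rewrite !expr0; field.
rewrite exprS IH !exprS.
have wk : w ^+ k != 0 by rewrite expf_neq0.
have zk : z ^+ k != 0 by rewrite expf_neq0.
field.
by rewrite wk zk w0 z0.
Qed.

Lemma key (a b : C) n : a != 0 -> b != 0 -> a != b -> a + b != 0 ->
  (Tk n.+1 n (('X - a%:P)^+n * ('X - b%:P)^+n)).[2 * a * b / (a + b)]
    / (2 * a * b / (a + b)) ^+ (n.+1 + n) =
  (if odd n then 0
       else (-1) ^+ (n./2) * (a - b) ^+ n * ((a + b) / (2 * a * b)) ^+ n.+1
            * \prod_(1 <= i < (n./2).+1) ((2 * i - 1)%N%:R) ^+ 2).
Proof.
move=> a0 b0 ab apb.
set x0 := 2 * a * b / (a + b).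
set P0 := ('X - a%:P)^+n * ('X - b%:P)^+n.
have hP : (size P0 <= (n + n).+1)%N.
  by rewrite (leq_trans (size_mul_leq _ _)) // !size_exp_XsubC /= addnS.
rewrite S1 //.
set e := - ((b - a) / (a + b)) ^+ 2.
have AE : (\poly_(i < (n + n).+1) (P0`_(n + n - i) * x0 ^+ (n + n - i))) \Po ('X + 1%:P)
    = (a * b) ^+ n *: ('X^2 + e%:P) ^+ n.
  apply: poly_ext_nat => i.
  have s0 : (i%:R + 1 : C) != 0 by rewrite natr1 pnatr_eq0.
  rewrite horner_comp !hornerE (S2 _ _ _ _ hP s0) /P0 !hornerE.
  rewrite /= -mulrA exprD mulrACA !expMn'; congr (_ ^+ n).
  rewrite /x0 /e; field.
  by rewrite apb s0.
rewrite AE coefZ coef_sq.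
case: ifP => hodd; first by rewrite !mulr0 mul0r.
have hn := odd_double_half n; rewrite hodd add0n in hn.
move: hn; set k := n./2 => hn; clearbody k; subst n.
rewrite (_ : (k.*2 - k = k)%N); last by rewrite -addnn addnK.
rewrite prodrXl -natr_prod -mulr_natr.
set D := (\prod_(1 <= i < k.+1) (2 * i - 1))%N.
have NI : ((k.*2)`!%:R * 'C(k.*2,k)%:R : C) = 4%:R ^+ k * D%:R ^+ 2.
  by rewrite -natrM nat_id natrM !natrX.
have m2 : (-1) ^+ (k.*2) = 1 :> C by rewrite -mul2n exprM sqrrN !expr1n.
have x00 : x0 != 0 by rewrite /x0 !mulf_neq0 ?invr_eq0 // pnatr_eq0.
have EX : x0 ^+ ((k.*2).+1 + k.*2) = x0 * (x0 ^+ k) ^+ 4.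
  by rewrite addSn exprS -addnn !exprD; ring.
have EA : (a - b) ^+ (k.*2) = ((a - b) ^+ k) ^+ 2 by rewrite -mul2n exprM exprAC.
have EB : (a * b) ^+ (k.*2) = ((a * b) ^+ k) ^+ 2 by rewrite -mul2n exprM exprAC.
have EY : ((a + b) / (2 * a * b)) ^+ (k.*2).+1 = x0^-1 * ((x0 ^+ k)^-1) ^+ 2.
  rewrite (_ : (a + b) / (2 * a * b) = x0^-1); last by rewrite /x0; field; rewrite a0 b0 apb.
  by rewrite exprS -mul2n exprM exprAC !exprVn.
have EE : e ^+ k = (-1) ^+ k * ((a - b) ^+ k) ^+ 2 * (x0 ^+ k) ^+ 2
          / (((a * b) ^+ k) ^+ 2 * 4%:R ^+ k).
  rewrite (_ : e = (-1) * ((a - b) ^+ 2 * x0 ^+ 2 / ((a * b) ^+ 2 * 4%:R))); last first.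
    by rewrite /e /x0; field; rewrite apb a0 b0.
  by rewrite powk // ?mulf_neq0 // pnatr_eq0.
rewrite m2 EX EA EB EY EE.
have C0 : ('C(k.*2, k)%:R : C) != 0 by rewrite pnatr_eq0 -lt0n bin_gt0 -addnn leq_addr.
have NF : ((k.*2)`!%:R : C) = 4%:R ^+ k * D%:R ^+ 2 / 'C(k.*2, k)%:R.
  by rewrite -NI; field.
rewrite -[_ *+ 'C(k.*2, k)]mulr_natr NF.
have xk : x0 ^+ k != 0 by rewrite expf_neq0.
have abk : (a * b) ^+ k != 0 by rewrite expf_neq0 // mulf_neq0.
have fk : (4%:R ^+ k : C) != 0 by rewrite expf_neq0 // pnatr_eq0.
field.
by rewrite xk x00 fk abk C0.
Qed.

End Lemma9Aux.

Theorem lemma9 (R : realType) (n : nat) (a b : CC R) :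
  a != 0 -> b != 0 -> a != b -> a + b != 0 -> (0 < n)%N ->
  ((fun x : CC R => (x - a) ^+ n * (x - b) ^+ n / x ^+ n.+1)^`(n)) x
    @[x --> (2 * a * b / (a + b))^']
  --> (if odd n then 0
       else (-1) ^+ (n./2) * (a - b) ^+ n * ((a + b) / (2 * a * b)) ^+ n.+1
            * \prod_(1 <= i < (n./2).+1) ((2 * i - 1)%N%:R) ^+ 2).
Proof.
move=> a0 b0 ab apb n0.
have x00 : (2 * a * b / (a + b) : CC R) != 0.
  by rewrite !mulf_neq0 ?invr_eq0 // pnatr_eq0.
have -> : (fun x : CC R => (x - a) ^+ n * (x - b) ^+ n / x ^+ n.+1) =
  (fun y => (('X - a%:P)^+n * ('X - b%:P)^+n).[y] / y ^+ n.+1).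
  by apply/funext => y; rewrite !hornerE.
rewrite -(@key R a b n a0 b0 ab apb).
exact: (@lim_derivn_rat R (('X - a%:P)^+n * ('X - b%:P)^+n) n.+1 n _ x00).
Qed.
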